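(* Let $G\ge 1$ and $B\ge 1$ be integers, and let $Z\in\{-1,+1\}^{G\times B}$ be a design matrix whose rows correspond to $G$ GEOs (regions) and whose columns correspond to $B$ brands, where $Z_{gb}=+1$ means that brand $b$ receives the treatment (T) in GEO $g$ and $Z_{gb}=-1$ means it receives the control (C). Suppose that each GEO has the treatment for exactly half of the brands (every row of $Z$ contains exactly $B/2$ entries equal to $+1$) and each brand is in the treatment group for exactly half of the GEOs (every column of $Z$ contains exactly $G/2$ entries equal to $+1$). Then it is impossible that simultaneously: (i) for every pair of distinct brands $b\ne b'$, each of the four combinations $(Z_{gb},Z_{gb'})\in\{TT,TC,CT,CC\}$ occurs for the same number of GEOs $g$; and (ii) for every pair of distinct GEOs $g\ne g'$, each of the four combinations $(Z_{gb},Z_{g'b})\in\{TT,TC,CT,CC\}$ occurs for the same number of brands $b$.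
   Context: T denotes the treatment level ($+1$) and C the control level ($-1$); for a pair of brands $b,b'$ the combination at GEO $g$ is the pair of levels $(Z_{gb},Z_{gb'})$, and analogously for a pair of GEOs. *)

(* Defs.v *)
From mathcomp Require Import all_boot all_order all_algebra.
Set Implicit Arguments. Unset Strict Implicit. Unset Printing Implicit Defensive.
Import GRing.Theory Num.Theory.
Local Open Scope ring_scope.

Definition levels : seq int := [:: 1; -1].

Definition pm1_matrix (G B : nat) (Z : 'M[int]_(G, B)) : Prop :=
  forall g b, Z g b = 1 \/ Z g b = -1.

Definition brand_pair_count G B (Z : 'M[int]_(G, B)) (b b' : 'I_B) (s t : int) : nat :=
  #|[set g : 'I_G | (Z g b == s) && (Z g b' == t)]|.

Definition geo_pair_count G B (Z : 'M[int]_(G, B)) (g g' : 'I_G) (s t : int) : nat :=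
  #|[set b : 'I_B | (Z g b == s) && (Z g' b == t)]|.

Definition brand_pairs_balanced G B (Z : 'M[int]_(G, B)) : Prop :=
  forall b b' : 'I_B, b != b' ->
    forall s t s' t', s \in levels -> t \in levels -> s' \in levels -> t' \in levels ->
      brand_pair_count Z b b' s t = brand_pair_count Z b b' s' t'.

Definition geo_pairs_balanced G B (Z : 'M[int]_(G, B)) : Prop :=
  forall g g' : 'I_G, g != g' ->
    forall s t s' t', s \in levels -> t \in levels -> s' \in levels -> t' \in levels ->
      geo_pair_count Z g g' s t = geo_pair_count Z g g' s' t'.

(* Main.v *)
Require Import Defs.
From mathcomp Require Import all_boot all_order all_algebra.
Local Open Scope ring_scope.
Import GRing.Theory Num.Theory.

Lemma sum_ind (n : nat) (P : pred 'I_n) :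
  \sum_(i : 'I_n) ((P i : bool) : nat)%:R = (#|[set i | P i]|%:R : int).
Proof.
rewrite -sum1_card natr_sum [RHS]big_mkcond /=; apply: eq_bigr => i _.
by rewrite inE; case: (P i).
Qed.

Theorem theorem1 (G B : nat) (Z : 'M[int]_(G, B)) :
  (1 <= G)%N -> (1 <= B)%N ->
  pm1_matrix Z ->
  (forall g : 'I_G, (2 * #|[set b : 'I_B | Z g b == 1]| = B)%N) ->
  (forall b : 'I_B, (2 * #|[set g : 'I_G | Z g b == 1]| = G)%N) ->
  ~ (brand_pairs_balanced Z /\ geo_pairs_balanced Z).
Proof.
move=> G1 B1 pm _ hcol [_ hgeo].
have colsum : forall b, \sum_(g : 'I_G) Z g b = 0.
  move=> b.
  have -> : \sum_(g : 'I_G) Z g b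
      = \sum_(g : 'I_G) (2 * ((Z g b == 1 : bool) : nat)%:R - 1).
    by apply: eq_bigr => g _; case: (pm g b) => ->.
  rewrite big_split /= sumrN -mulr_sumr sum_ind sumr_const card_ord.
  by rewrite -[G%:R](congr1 (fun n : nat => n%:R : int) (hcol b)) natrM subrr.
have diag : forall g, \sum_(b : 'I_B) Z g b * Z g b = B%:R.
  move=> g; rewrite (eq_bigr (fun _ => 1)); last first.
    by move=> b _; case: (pm g b) => ->.
  by rewrite sumr_const card_ord.
have off : forall g g' : 'I_G, g != g' -> \sum_(b : 'I_B) Z g b * Z g' b = 0.
  move=> g g' ne.
  have lv1 : (1 : int) \in levels by [].
  have lv2 : (-1 : int) \in levels by [].
  have -> : \sum_(b : 'I_B) Z g b * Z g' b =
    \sum_(b : 'I_B) (((Z g b == 1) && (Z g' b == 1) : bool) : nat)%:R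
    - \sum_(b : 'I_B) (((Z g b == 1) && (Z g' b == -1) : bool) : nat)%:R
    - \sum_(b : 'I_B) (((Z g b == -1) && (Z g' b == 1) : bool) : nat)%:R
    + \sum_(b : 'I_B) (((Z g b == -1) && (Z g' b == -1) : bool) : nat)%:R.
    rewrite -!sumrB -big_split /=; apply: eq_bigr => b _.
    by case: (pm g b) => ->; case: (pm g' b) => ->.
  rewrite !sum_ind.
  rewrite -/(geo_pair_count Z g g' 1 1) -/(geo_pair_count Z g g' 1 (-1)).
  rewrite -/(geo_pair_count Z g g' (-1) 1) -/(geo_pair_count Z g g' (-1) (-1)).
  rewrite -(hgeo g g' ne 1 1 1 (-1)) // -(hgeo g g' ne 1 1 (-1) 1) //.
  rewrite -(hgeo g g' ne 1 1 (-1) (-1)) //.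
  by rewrite subrr sub0r addNr.
have E : \sum_(g : 'I_G) \sum_(g' : 'I_G) \sum_(b : 'I_B) Z g b * Z g' b
    = \sum_(b : 'I_B) (\sum_(g : 'I_G) Z g b) * (\sum_(g' : 'I_G) Z g' b).
  under eq_bigr => g _ do rewrite exchange_big.
  rewrite exchange_big; apply: eq_bigr => b _.
  rewrite big_distrl; apply: eq_bigr => g _; by rewrite big_distrr.
have : \sum_(g : 'I_G) \sum_(g' : 'I_G) \sum_(b : 'I_B) Z g b * Z g' b = 0.
  by rewrite E big1 // => b _; rewrite colsum mul0r.
have -> : \sum_(g : 'I_G) \sum_(g' : 'I_G) \sum_(b : 'I_B) Z g b * Z g' b
    = \sum_(g : 'I_G) (B%:R : int).
  apply: eq_bigr => g _; rewrite (bigD1 g) //= diag big1 ?addr0 //.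
  by move=> g' ne; apply: off; rewrite eq_sym.
rewrite sumr_const card_ord => /eqP; rewrite mulrn_eq0 pnatr_eq0.
rewrite !eqn0Ngt G1 B1; exact: id.
Qed.
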